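(* Let $\ell\in\mathbb{Z}_{\ge 2}$ and let $b_{n,m}=b_{n,m}(\ell)$ be as in the context. Define rational functions $R_{\ell-j}(x)$ for $2\le j\le \ell$ by $R_{\ell-2}(x)=1$, $R_{\ell-3}(x)=x^{-1}$, and $R_{\ell-j}(x)=x^{-1}R_{\ell-j+1}(x)-R_{\ell-j+2}(x)$ for $j>3$. Then for every $2\le j\le \ell$, as formal power series in $x$, $$\sum_{\substack{m\ge 0,\ m\equiv \ell-j \bmod \ell\\ n\ge \ell-j}} b_{n,m}x^n \;=\; R_{\ell-j}(x)\sum_{\substack{m\ge 0,\ m\equiv \ell-2\bmod \ell\\ n\ge \ell-2}} b_{n,m}x^n .$$
   Context: For $n,m\in\mathbb{Z}_{\ge 0}$, $a_{n,m}$ is the number of sequences of integers $(x_0,\dots,x_n)$ with $x_0=0$, $x_n=m$, all $x_i\ge 0$ and $|x_i-x_{i-1}|=1$ (unit step paths on $\mathbb{Z}_{\ge 0}$ from $0$ to $m$ of length $n$). For fixed $\ell\in\mathbb{Z}_{\ge2}$, the numbers $b_{n,m}=b_{n,m}(\ell)$ ($n,m\ge 0$) are defined by: $b_{n,m}=a_{n,m}$ if $m\equiv -1\pmod \ell$; $b_{n,m}=b_{n-1,m-1}+b_{n-1,m+1}$ if $m\equiv m_0\pmod\ell$ with $0\le m_0<\ell-2$; $b_{n,m}=b_{n-1,m-1}$ if $m\equiv -2\pmod \ell$. Here the recursion is used for $n\ge 1$, with initial values $b_{0,0}=1$, $b_{0,m}=0$ for $m>0$, and the convention $b_{n,-1}=0$.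 (In particular $b_{n,m}=0$ for $m>n$.) *)

(* Defs.v *)
From mathcomp Require Import all_boot all_order all_algebra.
Set Implicit Arguments. Unset Strict Implicit. Unset Printing Implicit Defensive.
Import GRing.Theory Num.Theory.

(* a_{n,m}: number of sequences (x_0,...,x_n) of nonnegative integers with
   x_0 = 0, x_n = m and |x_i - x_{i-1}| = 1.  Such a sequence automatically has
   all x_i <= n, so we encode it as a finite function 'I_(n+1) -> 'I_(n+1). *)
Definition apath (n m : nat) : nat :=
  #|[set f : {ffun 'I_n.+1 -> 'I_n.+1} |
      [&& val (f ord0) == 0%N, val (f ord_max) == m &
          [forall i : 'I_n.+1, (i < n)%N ==>
             (val (f (inord i.+1)) == (val (f i)).+1) ||
             ((val (f i)) == (val (f (inord i.+1))).+1)]]]|.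

(* b_{n,m}(l), for l >= 2:
   - b_{n,m} = a_{n,m}                     if m = -1 (mod l);
   - b_{0,0} = 1, b_{0,m} = 0 (m > 0)       (consistent with the first clause);
   - b_{n,m} = b_{n-1,m-1}                 if m = -2 (mod l), n >= 1;
   - b_{n,m} = b_{n-1,m-1} + b_{n-1,m+1}   if m mod l < l-2, n >= 1;
   with the convention b_{n,-1} = 0. *)
Fixpoint bseq (l n : nat) : nat -> nat := fun m =>
  if m %% l == l.-1 then apath n m else
  match n with
  | 0 => (m == 0)%N : nat
  | n'.+1 =>
      let down := (if m is m'.+1 then bseq l n' m' else 0) in
      if m %% l == l.-2 then down else down + bseq l n' m.+1
  end.

(* Coefficient of x^n (n an integer) in the series
     sum_{m >= 0, m = r mod l, n >= r} b_{n,m} x^n   (zero for n < 0).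
   Since b_{n,m} = 0 for m > n, the sum over m is restricted to m <= n. *)
Definition Lcoef (l r : nat) (n : int) : int :=
  match n with
  | Posz n' => if (r <= n')%N then
                 Posz (\sum_(m < n'.+1 | m %% l == r) bseq l n' m)
               else 0
  | Negz _ => 0
  end.

(* Rpoly k is the polynomial P_k(y) with R_{l-(k+2)}(x) = P_k(x^{-1}):
   P_0 = 1, P_1 = y, P_{k+2} = y P_{k+1} - P_k. *)
Fixpoint Rpair (k : nat) : {poly int} * {poly int} :=
  match k with
  | 0 => (1%R, 'X%R)
  | k'.+1 => let: (p, q) := Rpair k' in (q, ('X * q - p)%R)
  end.
Definition Rpoly (k : nat) : {poly int} := (Rpair k).1.

(* Main.v *)
From mathcomp Require Import all_boot all_order all_algebra.
From mathcomp Require Import zify.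
Require Import Defs.
Import GRing.Theory Num.Theory.

Section Aux.
Variable l : nat.
Hypothesis l2 : (2 <= l)%N.

Lemma apath_big n m : (n < m)%N -> apath n m = 0%N.
Proof.
move=> nm; rewrite /apath; apply/eqP; rewrite cards_eq0; apply/eqP/setP => f.
rewrite inE in_set0; apply/negbTE.
apply/negP => /and3P [_ /eqP H _].
have := ltn_ord (f ord_max); rewrite H; move: nm; clear; lia.
Qed.

Lemma bseq_big n m : (n < m)%N -> bseq l n m = 0%N.
Proof.
elim: n m => [|n IH] m nm /=.
  by case: ifP => _; [apply: apath_big | case: m nm].
case: ifP => _; first by apply: apath_big.
case: m nm => [//|m] nm.
rewrite IH //; case: ifP => _ //; rewrite IH //; lia.
Qed.

Lemma bseq_S2 n m : (m.+1 %% l == l.-2)%N -> bseq l n.+1 m.+1 = bseq l n m.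
Proof.
move=> /eqP H /=.
rewrite H; have -> : (l.-2 == l.-1) = false by apply/eqP; lia.
by rewrite eqxx.
Qed.

Lemma bseq_Sr n m : (m.+1 %% l < l.-2)%N ->
  bseq l n.+1 m.+1 = (bseq l n m + bseq l n m.+2)%N.
Proof.
move=> H /=.
have -> : (m.+1 %% l == l.-1) = false by apply/eqP; lia.
by have -> : (m.+1 %% l == l.-2) = false by apply/eqP; lia.
Qed.

Lemma modS_eq m r : (r.+1 < l)%N -> (m.+1 %% l == r.+1) = (m %% l == r).
Proof.
move=> rl; apply/idP/idP => /eqP H; apply/eqP.
  move: H; rewrite modnS; case: ifP => // _ [] //.
have := modnDml m 1 l; rewrite H !addn1 modn_small //.
Qed.

Definition c r n := (\sum_(m < n.+1 | m %% l == r) bseq l n m)%N.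

Lemma cW r n M : (n < M)%N -> c r n = (\sum_(m < M | m %% l == r) bseq l n m)%N.
Proof.
move=> nM; rewrite /c (@big_ord_widen_cond _ 0%N addn _ _ (fun m => m %% l == r) (fun m => bseq l n m) nM) [RHS]big_mkcond [LHS]big_mkcond.
apply: eq_bigr => i _; case: (i %% l == r) => //=; case: ifP => // /negbT.
by rewrite -leqNgt => H; rewrite bseq_big.
Qed.

Lemma c_top n : (3 <= l)%N -> c (l - 3) n = c (l - 2) n.+1.
Proof.
move=> l3; rewrite (@cW (l-2) n.+1 n.+2 (ltnSn _)) big_mkcond big_ord_recl /=.
have -> : (0 %% l == l - 2)%N = false by rewrite mod0n; apply/eqP; lia.
rewrite (@cW _ n n.+1 (ltnSn _)) big_mkcond /= add0n.
have E : (l - 2 = (l - 3).+1)%N by lia.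
apply: eq_bigr => i _; rewrite /bump /= add1n E modS_eq; last by lia.
case: ifP => // H.
have h : (i.+1 %% l = l - 2)%N by apply/eqP; rewrite E modS_eq ?H //; lia.
rewrite h add0n.
have -> : (l - 2 == l.-1)%N = false by apply/eqP; lia.
by have -> : (l - 2 == l.-2)%N = true by apply/eqP; lia.
Qed.

Lemma c_rec r n : (r.+3 < l)%N -> c r.+1 n.+1 = (c r n + c r.+2 n)%N.
Proof.
move=> rl.
have A : (\sum_(i < n.+2 | i %% l == r.+1) bseq l n.+1 i =
   \sum_(i < n.+1 | i %% l == r) (bseq l n i + bseq l n i.+2))%N.
  rewrite big_mkcond big_ord_recl mod0n.
  have -> : (0 == r.+1)%N = false by [].
  rewrite [RHS]big_mkcond; apply: etrans (add0n _) _; apply: eq_bigr => i _.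
  rewrite lift0 modS_eq; last by lia.
  case: ifP => // /eqP H; rewrite bseq_Sr //.
  have -> : (i.+1 %% l = r.+1)%N by apply/eqP; rewrite modS_eq ?H //; lia.
  lia.
have B : (\sum_(i < n.+3 | i %% l == r.+2) bseq l n i =
   \sum_(i < n.+1 | i %% l == r) bseq l n i.+2)%N.
  rewrite big_mkcond big_ord_recl big_ord_recl mod0n.
  have -> : (0 == r.+2)%N = false by [].
  rewrite [RHS]big_mkcond; apply: etrans (add0n _) _.
  rewrite lift0 modn_small //; have -> : (1 == r.+2)%N = false by [].
  apply: etrans (add0n _) _; apply: eq_bigr => i _.
  rewrite !lift0 modS_eq; last by lia.
  by rewrite modS_eq; last by lia.
rewrite (@cW r.+1 n.+1 n.+2 (ltnSn _)) A big_split /=.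
rewrite (@cW r n n.+1 (ltnSn _)) (@cW r.+2 n n.+3 (leqW (ltnW (ltnSn n.+1)))) B //.
Qed.

Lemma Lpos r n : (r < l)%N -> Lcoef l r (Posz n) = Posz (c r n).
Proof.
move=> rl; rewrite /Lcoef; case: ifP => // /negbT; rewrite -ltnNge => nr.
rewrite /c big1 // => i /eqP H; exfalso.
have hi := ltn_ord i; rewrite modn_small in H; last by lia.
move: hi; rewrite H; lia.
Qed.

Local Open Scope ring_scope.

Lemma Lrec r (n : int) : (r.+3 < l)%N ->
  Lcoef l r n = Lcoef l r.+1 (n + 1) - Lcoef l r.+2 n.
Proof.
move=> rl; case: n => [n|[|k]].
- have -> : (Posz n + 1 = Posz n.+1) by rewrite -addn1 PoszD.
  rewrite !Lpos; try lia.
  by rewrite c_rec // PoszD addrK.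
- by rewrite /Lcoef /= subr0.
- by rewrite /Lcoef /= subr0.
Qed.

Lemma Ltop (n : int) : (3 <= l)%N -> Lcoef l (l - 3) n = Lcoef l (l - 2) (n + 1).
Proof.
move=> l3; case: n => [n|[|k]].
- have -> : (Posz n + 1 = Posz n.+1) by rewrite -addn1 PoszD.
  rewrite !Lpos; try lia.
  by rewrite c_top.
- rewrite /Lcoef /=; case: ifP => //; lia.
- by rewrite /Lcoef.
Qed.

End Aux.

Local Open Scope ring_scope.

Definition T (l : nat) (p : {poly int}) (n : int) :=
  \sum_(k < size p) p`_k * Lcoef l (l - 2) (n + k%:Z).

Lemma sumW (p : {poly int}) (f : nat -> int) N : (size p <= N)%N ->
  \sum_(k < size p) p`_k * f k = \sum_(k < N) p`_k * f k.
Proof.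
move=> H; rewrite (big_ord_widen N (fun k => p`_k * f k) H) big_mkcond.
apply: eq_bigr => i _; case: ifP => // /negbT; rewrite -leqNgt => Hi.
by rewrite nth_default // mul0r.
Qed.

Lemma T_sub l p q n : T l (p - q) n = T l p n - T l q n.
Proof.
rewrite /T (@sumW _ (fun k : nat => Lcoef l (l - 2) (n + k%:Z)) (maxn (size p) (size q))); last first.
  by apply: leq_trans (size_polyD _ _) _; rewrite size_polyN.
rewrite (@sumW p (fun k : nat => Lcoef l (l - 2) (n + k%:Z)) (maxn (size p) (size q))) ?leq_maxl //.
rewrite (@sumW q (fun k : nat => Lcoef l (l - 2) (n + k%:Z)) (maxn (size p) (size q))) ?leq_maxr //.
rewrite -sumrB; apply: eq_bigr => i _; by rewrite coefB mulrBl.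
Qed.

Lemma T_mulX l q n : T l ('X * q) n = T l q (n + 1).
Proof.
rewrite /T (@sumW _ (fun k : nat => Lcoef l (l - 2) (n + k%:Z)) (size q).+1); last first.
  rewrite mulrC; apply: leq_trans (size_polyMleq _ _) _.
  by rewrite size_polyX addn2.
rewrite big_ord_recl coefXM eqxx mul0r add0r.
apply: eq_bigr => i _; rewrite coefXM lift0 /=.
by rewrite -addrA -PoszD add1n.
Qed.

Lemma T_1 l n : T l 1 n = Lcoef l (l - 2) n.
Proof. by rewrite /T size_poly1 big_ord1 coef1 mul1r addr0. Qed.

Lemma Rpoly_SS k : Rpoly k.+2 = 'X * Rpoly k.+1 - Rpoly k.
Proof. by rewrite /Rpoly /=; case: (Rpair k). Qed.

Lemma Rpoly_1 : Rpoly 1 = 'X.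
Proof. by []. Qed.

Lemma main l (l2 : (2 <= l)%N) k : (k <= l - 2)%N ->
  forall n, Lcoef l (l - 2 - k) n = T l (Rpoly k) n.
Proof.
suff: ((k <= l - 2)%N -> forall n, Lcoef l (l - 2 - k) n = T l (Rpoly k) n) /\
      ((k.+1 <= l - 2)%N -> forall n, Lcoef l (l - 2 - k.+1) n = T l (Rpoly k.+1) n).
  by case.
elim: k => [|k [IH1 IH2]].
  split => [_ n|Hk n]; first by rewrite subn0 T_1.
  rewrite Rpoly_1 -[X in T l X _]mulr1 T_mulX T_1 -Ltop //; last by lia.
  by have -> : (l - 2 - 1 = l - 3)%N by lia.
split => // H n.
rewrite Rpoly_SS T_sub T_mulX -IH2; last by lia.
rewrite -IH1; last by lia.
have E : (l - 2 - k.+1 = (l - 2 - k.+2).+1)%N by lia.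
have E2 : (l - 2 - k = (l - 2 - k.+2).+2)%N by lia.
rewrite E E2 (@Lrec l l2) //; lia.
Qed.

Theorem lemma2p8 (l j : nat) (n : int) :
  (2 <= l)%N -> (2 <= j <= l)%N ->
  Lcoef l (l - j) n =
    \sum_(k < size (Rpoly (j - 2))) (Rpoly (j - 2))`_k * Lcoef l (l - 2) (n + k%:Z).
Proof.
move=> l2 /andP [j2 jl].
have -> : (l - j = l - 2 - (j - 2))%N by lia.
by rewrite (@main l l2) //; lia.
Qed.
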